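(* Let $t=(k_1,\dots,k_l)$ be a parameter tuple of length $l\in\mathbb{N}$, let $m\in\mathbb{N}_0$ and $s\in\mathbb{R}$ with $s>1$. Then $$\mathrm{grt}_{m+l}(\underbrace{2,\dots,2}_{m},k_1,\dots,k_l)\le\max\big(s\cdot m+1,\ \mathrm{cr}_{\mathrm{app}}(t,1-\tfrac1s)\big).$$
   Context: A parameter tuple is a non-decreasing tuple $(k_1,\dots,k_r)$ of integers $k_i\ge2$. An arithmetic progression of size $k$ is a $k$-element set $P\subset\mathbb{N}$ such that, in natural order, consecutive elements always have the same distance. Let $p_1<p_2<\dots$ be the prime numbers. For a parameter tuple $(k_1,\dots,k_r)$, the Green-Tao number $\mathrm{grt}_r(k_1,\dots,k_r)$ is the smallest $n_0\in\mathbb{N}$ such that for every $n\ge n_0$ and every $f:\{p_1,\dots,p_n\}\to\{1,\dots,r\}$ there is $i$ such that $f^{-1}(i)$ contains an arithmetic progression of size $k_i$. For $q>0$, $\mathrm{cr}_{\mathrm{app}}(t,q)\in\mathbb{N}\cup\{+\infty\}$ is the infimum of all $n\in\mathbb{N}$ such that for all $n'\ge n$ and all pairwise disjoint $S_1,\dots,S_l\subseteq\{p_1,\dots,p_{n'}\}$ with $S_i$ containing no arithmetic progression of size $k_i$, we have $\frac{|S_1|+\dots+|S_l|}{n'}<q$ (infimum of the empty set is $+\infty$). *)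

(* Defs.v *)
From HB Require Import structures.
From mathcomp Require Import all_boot all_order all_algebra.
From mathcomp Require Import boolp reals constructive_ereal.
Set Implicit Arguments. Unset Strict Implicit. Unset Printing Implicit Defensive.
Import Order.TTheory GRing.Theory Num.Theory.

Definition primepi (q : nat) : nat := \sum_(i < q.+1) prime i.

(* {p_1, ..., p_n}: the first n primes (p_i is the prime with primepi p_i = i) *)
Definition first_primes (n : nat) : pred nat :=
  [pred q | prime q && (primepi q <= n)].

Definition has_AP (S : pred nat) (k : nat) : Prop :=
  exists a d : nat, 0 < d /\ forall i, i < k -> S (a + i * d).

Definition param_tuple (ks : seq nat) : bool :=
  all (leq 2) ks && sorted leq ks.

(* infimum over N = {1,2,...} of a set of naturals; None = +infinity *)
Definition inf_pos (P : nat -> Prop) : option nat :=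
  match pselect (exists n, 0 < n /\ P n) with
  | left h => Some (@ex_minn (fun n => `[< 0 < n /\ P n >])
                     (let: ex_intro n Hn := h in ex_intro _ n (asboolT Hn)))
  | right _ => None
  end.

Definition ext_of_opt (R : realType) (o : option nat) : \bar R :=
  if o is Some n then (n%:R)%:E else +oo%E.

Definition grt_prop (ks : seq nat) (n0 : nat) : Prop :=
  forall n, n0 <= n ->
  forall f : nat -> 'I_(size ks),
  exists i : 'I_(size ks),
    has_AP [pred q | (q \in first_primes n) && (f q == i)] (nth 0 ks i).

Definition grt (R : realType) (ks : seq nat) : \bar R :=
  ext_of_opt R (inf_pos (grt_prop ks)).

Definition cr_app_prop (R : realType) (t : seq nat) (q : R) (n : nat) : Prop :=
  forall n', n <= n' ->
  forall S : 'I_(size t) -> seq nat,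
    (forall i, uniq (S i)) ->
    (forall i, {subset S i <= first_primes n'}) ->
    (forall i j, i != j -> forall x, x \in S i -> x \notin S j) ->
    (forall i, ~ has_AP (mem (S i)) (nth 0 t i)) ->
    ((\sum_(i < size t) size (S i))%:R / n'%:R < q)%R.

Definition cr_app (R : realType) (t : seq nat) (q : R) : \bar R :=
  ext_of_opt R (inf_pos (cr_app_prop t q)).

(* Main.v *)
Require Import Defs.
From HB Require Import structures.
From mathcomp Require Import all_boot all_order all_algebra.
From mathcomp Require Import boolp reals constructive_ereal.
From mathcomp Require Import lra.
Import Order.TTheory GRing.Theory Num.Theory.

Lemma primepiS x : primepi x.+1 = primepi x + prime x.+1.
Proof. by rewrite /primepi big_ord_recr. Qed.

Lemma primepi_mono y k : primepi y <= primepi (y + k).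
Proof.
elim: k => [|k IH]; first by rewrite addn0.
by rewrite addnS primepiS; apply: leq_trans IH (leq_addr _ _).
Qed.

Lemma primepi_le y z : y <= z -> primepi y <= primepi z.
Proof. by move=> H; rewrite -(subnKC H); apply: primepi_mono. Qed.

Lemma primepi_unb n : exists x, n <= primepi x.
Proof.
elim: n => [|n [x Hx]]; first by exists 0.
have [p Hxp Hp] := prime_above x.
exists p; case: p Hxp Hp => // p Hxp Hp.
rewrite primepiS Hp /= addn1 ltnS; exact: leq_trans Hx (primepi_le x p Hxp).
Qed.

Lemma primepi_eq n : exists x, primepi x = n.
Proof.
have Hex : exists x, n <= primepi x by apply: primepi_unb.
case: (ex_minnP Hex) => x Hx Hmin.
exists x; apply/eqP; rewrite eqn_leq Hx andbT.
case: x Hx Hmin => [|y] Hx Hmin.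
  have -> : primepi 0 = 0 by rewrite /primepi big_ord_recr big_ord0.
  by [].
have : ~~ (n <= primepi y).
  apply/negP => H; have := Hmin _ H; by rewrite ltnn.
rewrite -ltnNge => Hy; rewrite primepiS.
by case: (prime y.+1); rewrite ?addn1 ?addn0 // ltnW.
Qed.

Lemma size_primes x : size (filter prime (iota 0 x.+1)) = primepi x.
Proof.
elim: x => [|x IH]; first by rewrite /primepi big_ord_recr big_ord0.
rewrite -[x.+2]addn1 iotaD filter_cat size_cat IH primepiS /= add0n.
by case: (prime x.+1).
 
Qed.

Lemma inf_pos_le (P : nat -> Prop) n0 : 0 < n0 -> P n0 ->
  exists g, inf_pos P = Some g /\ g <= n0.
Proof.
move=> H0 HP; rewrite /inf_pos; case: pselect => [h|[]]; last by exists n0.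
eexists; split; first reflexivity.
case: ex_minnP => g _ Hmin; apply: Hmin; apply/asboolP; by split.
Qed.

Lemma inf_pos_some (P : nat -> Prop) g : inf_pos P = Some g -> 0 < g /\ P g.
Proof.
rewrite /inf_pos; case: pselect => [h|//].
by case: ex_minnP => g' /asboolP [? ?] _ [<-].
Qed.

Lemma has_AP_mono (P Q : pred nat) k : (forall q, P q -> Q q) ->
  has_AP P k -> has_AP Q k.
Proof. move=> H [a [d [Hd Ha]]]; exists a, d; split => // i Hi; exact: H (Ha i Hi). Qed.

Lemma size_sum_colors r (f : nat -> 'I_r) (L : seq nat) :
  size L = \sum_(i < r) count (fun q => nat_of_ord (f q) == i) L.
Proof.
elim: L => [|x L IH]; first by rewrite big1.
rewrite /= big_split /= -IH.
rewrite -add1n; congr (_ + _).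
rewrite (bigD1 (f x)) //= eqxx big1 //.
by move=> i Hi; apply/eqP; rewrite eqb0; apply: contra Hi => /eqP H; rewrite (val_inj H).
Qed.

Lemma AP2 (P : pred nat) a b : a != b -> P a -> P b -> has_AP P 2.
Proof.
move=> Hab Ha Hb; case: (ltngtP a b) => H; last by rewrite H eqxx in Hab.
- exists a, (b - a); split; first by rewrite subn_gt0.
  by case => [|[|//]] _; rewrite ?mul0n ?addn0 ?mul1n ?subnKC // ltnW.
- exists b, (a - b); split; first by rewrite subn_gt0.
  by case => [|[|//]] _; rewrite ?mul0n ?addn0 ?mul1n ?subnKC // ltnW.
Qed.

Theorem corollary2 (R : realType) (t : seq nat) (m : nat) (s : R) :
  param_tuple t -> (0 < size t)%N -> (1 < s)%R ->
  (grt R (nseq m 2%N ++ t)%SEQ <=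
     maxe ((s * m%:R + 1)%R%:E) (cr_app t (1 - s^-1)%R))%E.
Proof.
move=> Ht Hst Hs.
rewrite /grt /cr_app.
case Ec: (inf_pos (cr_app_prop t (1 - s^-1))) => [c|]; last by rewrite /= maxey leey.
have [c0 Hc] := inf_pos_some _ _ Ec.
have s0 : (0 < s)%R by apply: lt_trans Hs.
have sm0 : (0 <= s * m%:R)%R by apply: mulr_ge0; [apply: ltW|].
have [Hk1 Hk2] := andP (truncn_itv sm0).
set k := (Num.truncn (s * m%:R)).+1 in Hk2.
set n0 := maxn c k.
have Hgrt : grt_prop (nseq m 2 ++ t) n0.
  move=> n Hn f.
  have Hcn : c <= n by apply: leq_trans Hn; rewrite leq_maxl.
  have Hkn : k <= n by apply: leq_trans Hn; rewrite leq_maxr.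
  have [x Hx] := primepi_eq n.
  set L := filter prime (iota 0 x.+1).
  have HLs : size L = n by rewrite size_primes.
  have HLm : forall q, q \in L -> q \in first_primes n.
    move=> q; rewrite mem_filter mem_iota add0n => /andP [Hq /andP [_ Hqx]].
    by rewrite inE Hq /= -Hx; apply: primepi_le; rewrite -ltnS.
  have HLu : uniq L by rewrite filter_uniq // iota_uniq.
  apply: contrapT => Hno.
  have noAP : forall i : 'I_(size (nseq m 2 ++ t)),
      ~ has_AP [pred q | (q \in first_primes n) && (f q == i)]
               (nth 0 (nseq m 2 ++ t) i).
    by move=> i Hi; apply: Hno; exists i.
  have Hr : size (nseq m 2 ++ t) = m + size t by rewrite size_cat size_nseq.
  pose cnt j := count (fun q => nat_of_ord (f q) == j) L.
  have Hsum : n = \sum_(0 <= j < m) cnt j + \sum_(j < size t) cnt (j + m).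
    rewrite -HLs (size_sum_colors _ f L) -(big_mkord xpredT cnt) Hr.
    rewrite (@big_cat_nat _ _ _ m 0 (m + size t) _ _ (leq0n m) (leq_addr _ _)) /=.
    congr (_ + _).
    by rewrite -{1}[m]add0n big_addn addKn big_mkord.
  have Hcnt1 : forall j, j < m -> cnt j <= 1.
    move=> j Hj.
    have Hjr : j < size (nseq m 2 ++ t) by rewrite Hr ltn_addr.
    have Hnth : nth 0 (nseq m 2 ++ t) (Ordinal Hjr) = 2.
      by rewrite /= nth_cat size_nseq Hj nth_nseq Hj.
    rewrite leqNgt; apply/negP => H2.
    apply: (noAP (Ordinal Hjr)); rewrite Hnth.
    have HU := filter_uniq (fun q => nat_of_ord (f q) == j) HLu.
    move: H2 HU; rewrite /cnt -size_filter.
    case E: (filter _ L) => [|a [|b rest]] // _ /= /andP [Hab _].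
    have Ha : a \in filter (fun q => nat_of_ord (f q) == j) L by rewrite E inE eqxx.
    have Hb : b \in filter (fun q => nat_of_ord (f q) == j) L by rewrite E !inE eqxx orbT.
    have Hab' : a != b by apply: contra Hab => /eqP ->; rewrite inE eqxx.
    move: Ha Hb; rewrite mem_filter => /andP [Ha1 Ha2]; rewrite mem_filter => /andP [Hb1 Hb2].
    by apply: (@AP2 _ a b Hab') => /=; rewrite HLm.
  have HA : \sum_(0 <= j < m) cnt j <= m.
    apply: leq_trans (_ : \sum_(0 <= j < m) 1 <= m).
      by rewrite big_nat [X in _ <= X]big_nat; apply: leq_sum => j /andP [_ Hj]; apply: Hcnt1.
    by rewrite sum_nat_const_nat subn0 muln1.
  pose S (j : 'I_(size t)) := filter (fun q => nat_of_ord (f q) == j + m) L.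
  have HSu : forall j, uniq (S j) by move=> j; apply: filter_uniq.
  have HSsub : forall j, {subset S j <= first_primes n}.
    by move=> j q; rewrite mem_filter => /andP [_ /HLm].
  have HSdisj : forall i j, i != j -> forall x, x \in S i -> x \notin S j.
    move=> i j Hij q; rewrite !mem_filter => /andP [/eqP E1 _].
    apply/negP => /andP [/eqP E2 _].
    have := etrans (esym E1) E2 => /addIn /val_inj E.
    by rewrite E eqxx in Hij.
  have HSno : forall j, ~ has_AP (mem (S j)) (nth 0 t j).
    move=> j HAP.
    have Hjr : j + m < size (nseq m 2 ++ t) by rewrite Hr addnC ltn_add2l.
    apply: (noAP (Ordinal Hjr)).
    rewrite /= nth_cat size_nseq ltnNge leq_addl /= addnK.
    apply: has_AP_mono HAP => q Hq.
    have : q \in S j := Hq.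
    rewrite mem_filter => /andP [H1 H2]; by rewrite /= HLm.
  have Hfin := Hc n Hcn S HSu HSsub HSdisj HSno.
  have HB : \sum_(i < size t) size (S i) = \sum_(j < size t) cnt (j + m).
    by apply: eq_bigr => j _; rewrite size_filter.
  rewrite HB in Hfin.
  move: HA Hsum Hfin; set A := \sum_(0 <= j < m) cnt j;
    set B := \sum_(j < size t) cnt (j + m) => HA Hsum Hfin.
  have n0' : (0 < n%:R :> R)%R by rewrite ltr0n; apply: leq_trans Hkn.
  have HAR : (A%:R <= m%:R :> R)%R by rewrite ler_nat.
  have HnR : (n%:R = A%:R + B%:R :> R)%R by rewrite {1}Hsum natrD.
  have HkR : (s * m%:R < n%:R)%R.
    by apply: lt_le_trans Hk2 _; rewrite ler_nat.
  have su : (s * s^-1 = 1)%R by rewrite mulfV // gt_eqF.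
  move: Hfin; rewrite ltr_pdivrMr // => Hfin.
  set u := (s^-1)%R in su Hfin.
  have H1 : (u * n%:R < m%:R)%R.
    rewrite mulrBl mul1r HnR in Hfin; rewrite HnR.
    lra.
  have H2 : (s * (u * n%:R) < s * m%:R)%R by rewrite ltr_pM2l.
  rewrite mulrA su mul1r in H2.
  by move: (lt_trans H2 HkR); rewrite ltxx.
have H0 : 0 < n0 by rewrite leq_max c0.
have [g [-> Hg]] := inf_pos_le _ _ H0 Hgrt.
  rewrite /= -EFin_max lee_fin le_max.
  move: Hg; rewrite leq_max => /orP [Hg|Hg].
    by apply/orP; right; rewrite ler_nat.
  apply/orP; left; apply: le_trans (_ : (k%:R <= _)%R).
    by rewrite ler_nat.
  by rewrite /k -addn1 natrD lerD2r.
Qed.
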